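(* Let $C_H>0$, $c_H>0$ and $\theta\in(0,1)$, and set $\Theta=\theta\,\frac{1-e^{-c_H}}{1+e^{-c_H}}$. Let $y=(y_j)_{j\in\mathbb N}\in\ell^\infty(\mathbb N)$ have nonnegative entries and satisfy $$\forall j\in\mathbb N,\quad y_j\le C_He^{-c_Hj}+\Theta\sum_{k=0}^{+\infty}e^{-c_H|j-1-k|}y_k.$$ Then $y_j\le\rho r^j$ for all $j\in\mathbb N$, where $$r=\cosh(c_H)-2\sinh\!\left(\tfrac{c_H}{2}\right)\sqrt{\cosh^2\!\left(\tfrac{c_H}{2}\right)-\theta}\in\,]e^{-c_H},1[\quad\text{and}\quad \rho=\frac{C_H}{\Theta}(r-e^{-c_H})>0.$$ *)

(* Defs.v *)
From Stdlib Require Import Reals.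
From Coquelicot Require Import Coquelicot.
Open Scope R_scope.

Definition Theta_of (cH theta : R) : R :=
  theta * (1 - exp (- cH)) / (1 + exp (- cH)).

Definition r_of (cH theta : R) : R :=
  cosh cH - 2 * sinh (cH / 2) * sqrt ((cosh (cH / 2)) ^ 2 - theta).

Definition rho_of (CH cH theta : R) : R :=
  CH / Theta_of cH theta * (r_of cH theta - exp (- cH)).

(* Main.v *)
Require Import Defs.
From Stdlib Require Import Reals Lra Psatz.
From Coquelicot Require Import Coquelicot.
Open Scope R_scope.

Lemma key_facts (cH theta : R) : 0 < cH -> 0 < theta -> theta < 1 ->
  exp (- cH) < r_of cH theta /\ r_of cH theta < 1 /\
  Theta_of cH theta * (1 - exp (-cH) ^ 2) =
  (r_of cH theta - exp (-cH)) * (1 - exp (-cH) * r_of cH theta).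
Proof.
  intros hc h0 h1.
  unfold r_of, Theta_of, cosh, sinh.
  set (E := exp (cH/2)).
  assert (HE : 1 < E). { unfold E. rewrite <- exp_0. apply exp_increasing. lra. }
  assert (e1 : exp (- (cH/2)) = / E). { unfold E. apply exp_Ropp. }
  assert (e2 : exp cH = E * E). { unfold E. rewrite <- exp_plus. f_equal. lra. }
  assert (e3 : exp (- cH) = / E * / E). { rewrite <- e1. rewrite <- exp_plus. f_equal. lra. }
  rewrite e1, e2, e3.
  set (h := (E + / E) / 2). set (s := (E - / E) / 2).
  assert (hs : h^2 - s^2 = 1). { unfold h, s. field. lra. }
  assert (sp : 0 < s). { unfold s. assert (/E < 1). { rewrite <- Rinv_1. apply Rinv_lt_contravar; lra. } lra. }
  assert (hp : 0 < h). { unfold h. assert (0 < /E) by (apply Rinv_0_lt_compat; lra). lra. }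
  assert (hD : 0 <= h^2 - theta) by nra.
  set (D := sqrt (h ^ 2 - theta)).
  assert (D2 : D * D = h^2 - theta) by (apply sqrt_sqrt; lra).
  assert (D0 : 0 <= D) by apply sqrt_pos.
  assert (ch : (E * E + / E * / E) / 2 = h^2 + s^2). { unfold h, s. field. lra. }
  assert (qq : / E * / E = h^2 + s^2 - 2*s*h). { unfold h, s. field. lra. }
  rewrite ch. rewrite qq.
  assert (sD : s < D) by nra.
  assert (Dh : D < h) by nra.
  split; [nra|split; [nra|]].
  assert (th : theta = h^2 - D*D) by lra.
  rewrite th.
  assert (den : 1 + (h ^ 2 + s ^ 2 - 2 * s * h) <> 0) by nra.
  unfold h, s in *. field.
  all: try lra; nra.
Qed.

Lemma expn (c : R) (n : nat) : exp (- c * INR n) = exp (- c) ^ n.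
Proof.
  induction n as [|n IH]; simpl. { rewrite Rmult_0_r. apply exp_0. }
  rewrite <- IH, <- exp_plus. destruct n; simpl; f_equal; ring.
Qed.

Lemma T_series (c s : R) : 0 < c -> exp (- c) * s < 1 -> 0 <= s -> s <> exp (- c) ->
  forall j : nat, is_series (fun k => exp (- c * Rabs (INR j - 1 - INR k)) * s ^ k)
    ((exp (- c) / (1 - exp (- c) * s) + 1 / (s - exp (- c))) * s ^ j
       - exp (- c) ^ j / (s - exp (- c))).
Proof.
  intros hc hqs hs hsq.
  set (q := exp (- c)) in *.
  assert (hq : 0 < q) by apply exp_pos.
  assert (hsq' : s - q <> 0) by (intro; apply hsq; fold q; lra).
  induction j as [|j IH].
  - assert (G : is_series (fun k => q * (q * s) ^ k) (q * / (1 - q * s))).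
    { apply (is_series_scal_l q (fun k => (q*s)^k)). apply is_series_geom.
      rewrite Rabs_pos_eq; [lra|apply Rmult_le_pos; lra]. }
    replace ((q / (1 - q * s) + 1 / (s - q)) * s ^ 0 - q ^ 0 / (s - q)) with (q * / (1 - q * s))
      by (simpl; field; repeat split; try exact hsq'; lra).
    eapply is_series_ext; [|exact G]. intro k. simpl.
    rewrite Rminus_0_l.
    assert (HA : Rabs (- (1) - INR k) = INR (S k)) by (rewrite S_INR, <- Rabs_Ropp, Rabs_pos_eq; [ring| pose proof (pos_INR k); lra]).
    rewrite HA.
    rewrite expn. fold q. simpl. rewrite Rpow_mult_distr. ring.
  - apply is_series_decr_1.
    assert (G := is_series_scal_l s _ _ IH).
    eapply is_series_ext; [|
    replace (plus _ _) with (scal s ((q / (1 - q * s) + 1 / (s - q)) * s ^ j - q ^ j / (s - q)));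
    [exact G|] ].
    + intro k. rewrite !S_INR. unfold scal; simpl; unfold mult; simpl.
      replace (INR j + 1 - 1 - (INR k + 1)) with (INR j - 1 - INR k) by ring.
      ring.
    + rewrite S_INR. unfold scal, plus, opp; simpl; unfold mult; simpl.
      replace (INR j + 1 - 1 - 0) with (INR j) by ring.
      rewrite Rabs_pos_eq by apply pos_INR. rewrite expn. fold q.
      simpl. field. repeat split; try exact hsq'; lra.
Qed.

Lemma series_comb (a b : nat -> R) (la lb al be : R) :
  is_series a la -> is_series b lb ->
  is_series (fun k => al * a k + be * b k) (al * la + be * lb).
Proof.
  intros Ha Hb.
  exact (is_series_plus _ _ _ _ (is_series_scal_l al _ _ Ha) (is_series_scal_l be _ _ Hb)).
Qed.

Theorem lemma3p5 (CH cH theta : R) (y : nat -> R)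
  (hCH : 0 < CH) (hcH : 0 < cH) (hth0 : 0 < theta) (hth1 : theta < 1)
  (hbdd : exists M : R, forall j : nat, Rabs (y j) <= M)
  (hnn : forall j : nat, 0 <= y j)
  (hineq : forall j : nat,
     y j <= CH * exp (- cH * INR j)
            + Theta_of cH theta
              * Series (fun k : nat => exp (- cH * Rabs (INR j - 1 - INR k)) * y k)) :
  (exp (- cH) < r_of cH theta /\ r_of cH theta < 1) /\
  0 < rho_of CH cH theta /\
  (forall j : nat, y j <= rho_of CH cH theta * (r_of cH theta) ^ j).
Proof.
  destruct (key_facts cH theta hcH hth0 hth1) as [hqr [hr1 hkey]].
  assert (hq : 0 < exp (- cH)) by apply exp_pos.
  pose proof (T_series cH (r_of cH theta) hcH ltac:(nra) ltac:(lra) ltac:(lra)) as hTr.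
  pose proof (T_series cH 1 hcH ltac:(lra) ltac:(lra) ltac:(lra)) as hT1.
  assert (hThe : Theta_of cH theta = theta * (1 - exp (- cH)) / (1 + exp (- cH))) by reflexivity.
  assert (hrho : rho_of CH cH theta = CH / Theta_of cH theta * (r_of cH theta - exp (- cH))) by reflexivity.
  set (q := exp (- cH)) in *.
  set (r := r_of cH theta) in *.
  set (Th := Theta_of cH theta) in *.
  set (rho := rho_of CH cH theta) in *.
  assert (hTh : 0 < Th). { rewrite hThe. apply Rdiv_lt_0_compat; nra. }
  assert (hrho0 : 0 < rho). { rewrite hrho. apply Rmult_lt_0_compat; [apply Rdiv_lt_0_compat|]; lra. }
  split; [lra|]. split; [exact hrho0|].
  set (a := fun j k : nat => exp (- cH * Rabs (INR j - 1 - INR k))).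
  set (Tr := fun j : nat => (q / (1 - q * r) + 1 / (r - q)) * r ^ j - q ^ j / (r - q)).
  set (T1 := fun j : nat => (q / (1 - q * 1) + 1 / (1 - q)) * 1 ^ j - q ^ j / (1 - q)).
  assert (hT1b : forall j, Th * T1 j <= theta).
  { intro j. unfold T1. rewrite pow1, hThe.
    assert (0 <= q ^ j) by (apply pow_le; lra).
    replace (theta * (1 - q) / (1 + q) * ((q / (1 - q * 1) + 1 / (1 - q)) * 1 - q ^ j / (1 - q)))
      with (theta - theta * q ^ j / (1 + q)) by (field; lra).
    assert (0 <= theta * q ^ j / (1 + q)) by (apply Rdiv_le_0_compat; nra).
    lra. }
  assert (zeq : forall j, rho * r ^ j = CH * q ^ j + Th * (rho * Tr j)).
  { assert (hqr1 : 0 < 1 - q * r) by nra.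
    assert (hk2 : (r - q) / Th = (1 - q^2)/(1 - q*r)).
    { apply (Rmult_eq_reg_r (Th * (1 - q*r))); [|nra].
      replace ((r-q)/Th*(Th*(1-q*r))) with ((r-q)*(1-q*r)) by (field; lra).
      rewrite <- hkey. field. lra. }
    intro j. unfold Tr. rewrite hrho.
    replace (CH / Th * (r - q) * r ^ j) with (CH * r^j * ((r-q)/Th)) by (field; lra).
    rewrite hk2. field. repeat split; lra. }
  destruct hbdd as [M hM].
  assert (hM0 : 0 <= M) by (pose proof (Rabs_pos (y 0%nat)); specialize (hM 0%nat); lra).
  assert (claim : forall n k, y k <= rho * r ^ k + theta ^ n * M).
  { induction n as [|n IH]; intro j.
    - simpl. specialize (hM j). apply Rabs_le_between in hM.
      assert (0 <= rho * r ^ j) by (apply Rmult_le_pos; [lra|apply pow_le; lra]). lra.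
    - set (B := theta ^ n * M) in *.
      assert (hB : 0 <= B) by (apply Rmult_le_pos; [apply pow_le; lra|lra]).
      assert (HS : is_series (fun k => a j k * (rho * r ^ k + B)) (rho * Tr j + B * T1 j)).
      { eapply is_series_ext; [|exact (series_comb _ _ _ _ rho B (hTr j) (hT1 j))].
        intro k. simpl. rewrite pow1. unfold a. ring. }
      assert (HL : Series (fun k => a j k * y k) <= Series (fun k => a j k * (rho * r ^ k + B))).
      { apply Series_le; [|eexists; exact HS].
        intro k. assert (0 < a j k) by (unfold a; apply exp_pos).
        specialize (IH k). specialize (hnn k). split; nra. }
      rewrite (is_series_unique _ _ HS) in HL.
      specialize (hineq j). fold a in hineq. rewrite expn in hineq. fold q in hineq.
      specialize (zeq j). specialize (hT1b j).
      replace (theta ^ S n * M) with (theta * B) by (unfold B; simpl; ring).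
      assert (Th * (B * T1 j) <= theta * B) by nra.
      assert (H2 : Th * Series (fun k => a j k * y k) <= Th * (rho * Tr j + B * T1 j)) by (apply Rmult_le_compat_l; lra).
      unfold a in H2; cbv beta in H2. lra. }
  intro j.
  destruct (Rle_or_lt (y j) (rho * r ^ j)) as [h|h]; [exact h|exfalso].
  destruct (pow_lt_1_zero theta ltac:(rewrite Rabs_pos_eq; lra) ((y j - rho * r ^ j) / (M + 1))
     ltac:(apply Rdiv_lt_0_compat; lra)) as [N HN].
  specialize (HN N (le_n N)). specialize (claim N j).
  rewrite Rabs_pos_eq in HN by (apply pow_le; lra).
  apply (Rmult_lt_compat_r (M + 1)) in HN; [|lra].
  unfold Rdiv in HN. rewrite Rmult_assoc, Rinv_l, Rmult_1_r in HN by lra.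
  assert (0 <= theta ^ N) by (apply pow_le; lra).
  nra.
Qed.
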